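(* Let $G$, $\mathcal Q_\delta$, $\mathcal T_{\mathcal X}$ and BQ-CADMM be as in the context, with arbitrary $a\in\mathbb R$, $\Delta>0$, $\delta\in(0,\Delta)$, $\rho>0$ and arbitrary data $r_1,\dots,r_n\in\mathbb R$. Let $\bar r=\frac1n\sum_{i=1}^n r_i$. Then there exists a finite $k_0$ such that for all $k\ge k_0$ exactly one of the following holds: (i) (convergence) $\mathcal Q_\delta(x_1^k)=\mathcal Q_\delta(x_2^k)=\cdots=\mathcal Q_\delta(x_n^k)=x_Q^*$ for a common value $x_Q^*\in\{a,a+\Delta\}$ independent of $k$, and $$|x_Q^*-\mathcal T_{\mathcal X}(\bar r)|\le \Big(1+4\rho\tfrac{m}{n}\Big)(\Delta-\delta)\ \text{ if } x_Q^*=a,\qquad |x_Q^*-\mathcal T_{\mathcal X}(\bar r)|<\Big(1+4\rho\tfrac{m}{n}\Big)\delta\ \text{ if } x_Q^*=a+\Delta;$$ (ii) (cycling) there is a finite period $T\ge2$ with $x_i^k=x_i^{k+T}$ for all $i=1,\dots,n$, such that $$\sum_{l=0}^{T-1}\mathcal Q_\delta(x_1^{k+l})=\sum_{l=0}^{T-1}\mathcal Q_\delta(x_2^{k+l})=\cdots=\sum_{l=0}^{T-1}\mathcal Q_\delta(x_n^{k+l}),$$ and moreover $|\bar r-(a+\Delta-\delta)|<6\rho n\Delta$.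
   Context: Let $G$ be a connected undirected simple graph on nodes $\{1,\dots,n\}$, $n\ge2$, with $m$ edges; $\mathcal N_i$ is the set of neighbors of node $i$ (with $i\notin\mathcal N_i$), so $\sum_i|\mathcal N_i|=2m$. Given $a\in\mathbb R$, $\Delta>0$ and $\delta\in(0,\Delta)$, the $\delta$-quantizer is $\mathcal Q_\delta(x)=a$ if $x\le a+\Delta-\delta$ and $\mathcal Q_\delta(x)=a+\Delta$ otherwise; $\mathcal X=[a,a+\Delta]$ and $\mathcal T_{\mathcal X}:\mathbb R\to\mathcal X$ is the projection onto $\mathcal X$ (nearest point). Given local data $r_1,\dots,r_n\in\mathbb R$ and a parameter $\rho>0$, BQ-CADMM is the deterministic iteration with $x_i^0=0$, $\alpha_i^0=0$ for all $i$ and, for $k\ge0$, $$x_i^{k+1}=\frac{1}{1+2\rho|\mathcal N_i|}\Big(\rho|\mathcal N_i|\mathcal Q_\delta(x_i^k)+\rho\sum_{j\in\mathcal N_i}\mathcal Q_\delta(x_j^k)-\alpha_i^k+r_i\Big),$$ $$\alpha_i^{k+1}=\alpha_i^k+\rho\Big(|\mathcal N_i|\mathcal Q_\delta(x_i^{k+1})-\sum_{j\in\mathcal N_i}\mathcal Q_\delta(x_j^{k+1})\Big).$$ *)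

(* Defs.v *)
From Stdlib Require Import Reals Lra Lia Arith List Relations.
Import ListNotations.
Open Scope R_scope.

(* Nodes are 0..n-1 (the paper's 1..n shifted by one). *)
Definition nodes (n : nat) : list nat := seq 0 n.

Definition sumR (l : list nat) (f : nat -> R) : R :=
  fold_right (fun i acc => f i + acc) 0 l.

Definition simple_graph (n : nat) (adj : nat -> nat -> bool) : Prop :=
  (forall i j, adj i j = adj j i) /\
  (forall i, adj i i = false) /\
  (forall i j, adj i j = true -> (i < n)%nat /\ (j < n)%nat).

Definition edge_rel (n : nat) (adj : nat -> nat -> bool) : relation nat :=
  fun i j => adj i j = true.

Definition connected (n : nat) (adj : nat -> nat -> bool) : Prop :=
  forall i j, (i < n)%nat -> (j < n)%nat -> clos_refl_trans nat (edge_rel n adj) i j.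

Definition nbrs (n : nat) (adj : nat -> nat -> bool) (i : nat) : list nat :=
  filter (adj i) (nodes n).

Definition deg (n : nat) (adj : nat -> nat -> bool) (i : nat) : nat :=
  length (nbrs n adj i).

Definition num_edges (n : nat) (adj : nat -> nat -> bool) : nat :=
  fold_right Nat.add 0%nat
    (map (fun i => length (filter (fun j => andb (Nat.ltb i j) (adj i j)) (nodes n))) (nodes n)).

Definition Qd (a Delta delta x : R) : R :=
  if Rle_dec x (a + Delta - delta) then a else a + Delta.

Definition projX (a Delta x : R) : R := Rmax a (Rmin x (a + Delta)).

Definition bq_step (n : nat) (adj : nat -> nat -> bool) (a Delta delta rho : R)
  (r : nat -> R) (st : (nat -> R) * (nat -> R)) : (nat -> R) * (nat -> R) :=
  let (x, al) := st in
  let Q := Qd a Delta delta in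
  let x' := fun i =>
    (rho * INR (deg n adj i) * Q (x i) + rho * sumR (nbrs n adj i) (fun j => Q (x j))
       - al i + r i) / (1 + 2 * rho * INR (deg n adj i)) in
  let al' := fun i =>
    al i + rho * (INR (deg n adj i) * Q (x' i) - sumR (nbrs n adj i) (fun j => Q (x' j))) in
  (x', al').

Fixpoint bq_state (n : nat) (adj : nat -> nat -> bool) (a Delta delta rho : R)
  (r : nat -> R) (k : nat) : (nat -> R) * (nat -> R) :=
  match k with
  | O => (fun _ => 0, fun _ => 0)
  | S k' => bq_step n adj a Delta delta rho r (bq_state n adj a Delta delta rho r k')
  end.

Definition bq_x n adj a Delta delta rho r (k i : nat) : R :=
  fst (bq_state n adj a Delta delta rho r k) i.

Definition bq_alpha n adj a Delta delta rho r (k i : nat) : R :=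
  snd (bq_state n adj a Delta delta rho r k) i.

Definition rbar (n : nat) (r : nat -> R) : R := sumR (nodes n) r / INR n.

Definition periodic_from n adj a Delta delta rho r (k0 T : nat) : Prop :=
  forall k i, (k0 <= k)%nat -> (i < n)%nat ->
    bq_x n adj a Delta delta rho r (k + T) i = bq_x n adj a Delta delta rho r k i.

Definition converges_alt n adj a Delta delta rho r (k0 : nat) : Prop :=
  exists xQ : R,
    (xQ = a \/ xQ = a + Delta) /\
    (forall k i, (k0 <= k)%nat -> (i < n)%nat ->
       Qd a Delta delta (bq_x n adj a Delta delta rho r k i) = xQ) /\
    (xQ = a -> Rabs (xQ - projX a Delta (rbar n r))
                <= (1 + 4 * rho * INR (num_edges n adj) / INR n) * (Delta - delta)) /\
    (xQ = a + Delta -> Rabs (xQ - projX a Delta (rbar n r))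
                < (1 + 4 * rho * INR (num_edges n adj) / INR n) * delta).

Definition cycles_alt n adj a Delta delta rho r (k0 : nat) : Prop :=
  exists T : nat,
    (2 <= T)%nat /\
    periodic_from n adj a Delta delta rho r k0 T /\
    (forall T', (1 <= T')%nat -> (T' < T)%nat -> ~ periodic_from n adj a Delta delta rho r k0 T') /\
    (forall k i j, (k0 <= k)%nat -> (i < n)%nat -> (j < n)%nat ->
       sumR (seq 0 T) (fun l => Qd a Delta delta (bq_x n adj a Delta delta rho r (k + l) i))
       = sumR (seq 0 T) (fun l => Qd a Delta delta (bq_x n adj a Delta delta rho r (k + l) j))) /\
    Rabs (rbar n r - (a + Delta - delta)) < 6 * rho * INR n * Delta.

(* Main.v *)
Require Import Defs.
From Stdlib Require Import Reals Lra Lia Arith List Relations Classical ZArith.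
Import ListNotations.
Open Scope R_scope.

Lemma sumR_nil f : sumR [] f = 0. Proof. reflexivity. Qed.
Lemma sumR_cons i l f : sumR (i :: l) f = f i + sumR l f. Proof. reflexivity. Qed.

Lemma sumR_app l1 l2 f : sumR (l1 ++ l2) f = sumR l1 f + sumR l2 f.
Proof. induction l1; simpl; [lra|]. unfold sumR in *; simpl. rewrite IHl1. lra. Qed.

Lemma sumR_ext_in l f g : (forall j, In j l -> f j = g j) -> sumR l f = sumR l g.
Proof. induction l; intros H; simpl; auto. rewrite (H a) by (left; auto).
  rewrite IHl; auto. intros; apply H; right; auto. Qed.

Lemma sumR_plus l f g : sumR l (fun i => f i + g i) = sumR l f + sumR l g.
Proof. induction l; simpl; [lra|]. rewrite IHl; lra. Qed.

Lemma sumR_minus l f g : sumR l (fun i => f i - g i) = sumR l f - sumR l g.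
Proof. induction l; simpl; [lra|]. rewrite IHl; lra. Qed.

Lemma sumR_scal l c f : sumR l (fun i => c * f i) = c * sumR l f.
Proof. induction l; simpl; [lra|]. rewrite IHl; lra. Qed.

Lemma sumR_const l c : sumR l (fun _ => c) = INR (length l) * c.
Proof. induction l; simpl length; [simpl; lra|]. rewrite sumR_cons, IHl, S_INR; lra. Qed.

Lemma sumR_le l f g : (forall j, In j l -> f j <= g j) -> sumR l f <= sumR l g.
Proof. induction l; intros H; simpl; [lra|].
  assert (f a <= g a) by (apply H; left; auto).
  assert (sumR l f <= sumR l g) by (apply IHl; intros; apply H; right; auto). lra. Qed.

Lemma sumR_lt l f g : l <> [] -> (forall j, In j l -> f j < g j) -> sumR l f < sumR l g.
Proof. induction l; intros Hn H; [congruence|]. simpl.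
  assert (f a < g a) by (apply H; left; auto).
  destruct l as [|b l]. simpl; lra.
  assert (sumR (b::l) f < sumR (b::l) g) by (apply IHl; [congruence| intros; apply H; right; auto]).
  lra. Qed.

Lemma sumR_map l g f : sumR (map g l) f = sumR l (fun i => f (g i)).
Proof. induction l; simpl; auto. rewrite IHl; auto. Qed.

Lemma sumR_filter p l f : sumR (filter p l) f = sumR l (fun j => if p j then f j else 0).
Proof. induction l; simpl; auto. destruct (p a); simpl; rewrite IHl; lra. Qed.

Lemma sumR_exchange l1 l2 (F : nat -> nat -> R) :
  sumR l1 (fun i => sumR l2 (fun j => F i j)) = sumR l2 (fun j => sumR l1 (fun i => F i j)).
Proof. induction l1; simpl.
  - induction l2; simpl; auto. rewrite <- IHl2; lra.
  - rewrite IHl1. rewrite <- sumR_plus. reflexivity. Qed.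

Lemma sumR_eq_max l f M : (forall j, In j l -> f j <= M) -> sumR l f = INR (length l) * M ->
  forall j, In j l -> f j = M.
Proof. induction l; intros H1 H2 j Hj; [destruct Hj|].
  simpl length in H2; rewrite S_INR in H2; simpl in H2.
  assert (f a <= M) by (apply H1; left; auto).
  assert (sumR l f <= INR (length l) * M).
  { rewrite <- sumR_const; apply sumR_le; intros; apply H1; right; auto. }
  destruct Hj as [<-|Hj]. lra. apply IHl; auto. intros; apply H1; right; auto. lra. Qed.

Lemma sumR_eq_min l f M : (forall j, In j l -> M <= f j) -> sumR l f = INR (length l) * M ->
  forall j, In j l -> f j = M.
Proof. intros H1 H2 j Hj.
  assert (- f j = - M); [|lra].
  apply (sumR_eq_max l (fun j => - f j) (-M)); auto.
  intros; specialize (H1 j0 H); lra.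
  replace (INR (length l) * - M) with (-1 * (INR (length l) * M)) by ring.
  rewrite <- H2. rewrite <- sumR_scal. apply sumR_ext_in; intros; ring. Qed.

Lemma sumR_nonneg_term l f i : (forall j, In j l -> 0 <= f j) -> In i l -> f i <= sumR l f.
Proof. induction l; intros H Hi; [destruct Hi|]. simpl.
  assert (0 <= f a) by (apply H; left; auto).
  assert (0 <= sumR l f) by (rewrite <- (Rmult_0_r (INR (length l))), <- sumR_const; apply sumR_le; intros; apply H; right; auto).
  destruct Hi as [<-|Hi]. lra. assert (f i <= sumR l f) by (apply IHl; auto; intros; apply H; right; auto). lra. Qed.

Lemma INR_length_filter p l : INR (length (filter p l)) = sumR l (fun j => if p j then 1 else 0).
Proof. induction l; simpl; auto. destruct (p a); simpl length; try rewrite S_INR; rewrite IHl; lra. Qed.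

Lemma INR_fold_add (h : nat -> nat) l : INR (fold_right Nat.add 0%nat (map h l)) = sumR l (fun i => INR (h i)).
Proof. induction l; simpl; auto. rewrite plus_INR, IHl. auto. Qed.

Lemma sumR_two l f a D : (forall j, f j = a \/ f j = a + D) ->
  exists m : Z, sumR l f = INR (length l) * a + D * IZR m.
Proof. induction l; intros H. exists 0%Z; simpl; lra.
  destruct IHl as [m Hm]; auto. simpl length; rewrite S_INR, sumR_cons, Hm.
  destruct (H a0) as [E|E]; rewrite E. exists m; lra. exists (m+1)%Z; rewrite plus_IZR; lra. Qed.

Lemma nodup_or_dup {A} (f : nat -> A) N :
  NoDup (map f (seq 0 N)) \/ exists i j, (i < j)%nat /\ f i = f j.
Proof. induction N. left; constructor.
  destruct IHN as [H|H]; [|right; auto].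
  destruct (classic (exists i, (i < N)%nat /\ f i = f N)) as [[i [Hi E]]|Hno].
  - right; exists i, N; auto.
  - left. rewrite seq_S, map_app. apply NoDup_app; auto. repeat constructor; auto.
    intros y Hy Hy2. simpl in Hy2. destruct Hy2 as [<-|[]].
    apply in_map_iff in Hy. destruct Hy as [i [Ei Hi]]. apply in_seq in Hi.
    apply Hno. exists i; split; [lia|auto]. Qed.

Lemma pigeon {A} (L : list A) (f : nat -> A) : (forall k, In (f k) L) ->
  exists i j, (i < j)%nat /\ f i = f j.
Proof. intros H. destruct (nodup_or_dup f (S (length L))) as [Hd|Hd]; auto.
  exfalso. assert (length (map f (seq 0 (S (length L)))) <= length L)%nat.
  { apply NoDup_incl_length; auto. intros y Hy. apply in_map_iff in Hy. destruct Hy as [k [<- _]]; auto. }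
  rewrite length_map, length_seq in H0. lia. Qed.

Fixpoint words {A} (C : list A) (m : nat) : list (list A) :=
  match m with O => [[]] | S m => flat_map (fun c => map (cons c) (words C m)) C end.

Lemma in_words {A} (C : list A) : forall l m, length l = m -> (forall y, In y l -> In y C) -> In l (words C m).
Proof. induction l; intros m Hm H; simpl in Hm; subst; simpl. auto.
  apply in_flat_map. exists a; split. apply H; left; auto.
  apply in_map. apply IHl; auto. intros; apply H; right; auto. Qed.

Definition Zrange (N : Z) : list Z := map (fun m => (Z.of_nat m - N)%Z) (seq 0 (Z.to_nat (2*N+1))).

Lemma in_Zrange N z : (- N <= z <= N)%Z -> In z (Zrange N).
Proof. intros H. unfold Zrange. apply in_map_iff. exists (Z.to_nat (z + N)). split. lia.
  apply in_seq. lia. Qed.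

Lemma min_exists (P : nat -> Prop) N : P N -> exists p, P p /\ forall p', (p' < p)%nat -> ~ P p'.
Proof. induction N as [N IH] using (well_founded_induction lt_wf). intros HP.
  destruct (classic (exists p', (p' < N)%nat /\ P p')) as [[p' [Hlt HP']]|Hno].
  - apply (IH p'); auto.
  - exists N; split; auto. intros p' Hp' HP'. apply Hno; eauto. Qed.


Section G.
Variables (n : nat) (adj : nat -> nat -> bool).
Hypothesis Hg : simple_graph n adj.

Lemma in_nbrs i j : In j (nbrs n adj i) <-> (j < n)%nat /\ adj i j = true.
Proof. unfold nbrs, nodes. rewrite filter_In, in_seq. split; intros [H1 H2]; split; auto; lia. Qed.

Lemma deg_sum i : INR (deg n adj i) = sumR (nodes n) (fun j => if adj i j then 1 else 0).
Proof. unfold deg, nbrs. apply INR_length_filter. Qed.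

Lemma nbrs_sum i g : sumR (nbrs n adj i) g = sumR (nodes n) (fun j => if adj i j then g j else 0).
Proof. unfold nbrs. apply sumR_filter. Qed.

Lemma double_count g :
  sumR (nodes n) (fun i => sumR (nbrs n adj i) g) = sumR (nodes n) (fun j => INR (deg n adj j) * g j).
Proof.
  rewrite (sumR_ext_in _ _ (fun i => sumR (nodes n) (fun j => if adj i j then g j else 0)))
    by (intros; apply nbrs_sum).
  rewrite sumR_exchange. apply sumR_ext_in; intros j _.
  rewrite deg_sum, Rmult_comm, <- sumR_scal. apply sumR_ext_in; intros i _.
  destruct Hg as [Hs _]. rewrite (Hs i j). destruct (adj j i); ring. Qed.

Lemma pt_split i j : (if adj i j then 1 else 0) =
  (if (Nat.ltb i j && adj i j)%bool then 1 else 0) + (if (Nat.ltb j i && adj j i)%bool then 1 else 0).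
Proof. destruct Hg as [Hs [Hi _]]. rewrite (Hs j i).
  destruct (Nat.ltb_spec i j); destruct (Nat.ltb_spec j i); simpl; try lia.
  - destruct (adj i j); lra.
  - destruct (adj i j); lra.
  - assert (i = j) by lia; subst. rewrite Hi. lra. Qed.

Lemma deg_total_edges :
  sumR (nodes n) (fun i => INR (deg n adj i)) = 2 * INR (num_edges n adj).
Proof.
  unfold num_edges. rewrite INR_fold_add.
  set (A := fun i j => if (Nat.ltb i j && adj i j)%bool then 1 else 0).
  assert (E1 : sumR (nodes n) (fun i => INR (length (filter (fun j => (Nat.ltb i j && adj i j)%bool) (nodes n))))
     = sumR (nodes n) (fun i => sumR (nodes n) (fun j => A i j))).
  { apply sumR_ext_in; intros; apply INR_length_filter. }
  assert (E2 : sumR (nodes n) (fun i => INR (deg n adj i)) =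
     sumR (nodes n) (fun i => sumR (nodes n) (fun j => A i j) + sumR (nodes n) (fun j => A j i))).
  { apply sumR_ext_in; intros i _. rewrite deg_sum, <- sumR_plus. apply sumR_ext_in; intros j _. apply pt_split. }
  rewrite E1, E2, sumR_plus. rewrite (sumR_exchange (nodes n) (nodes n) (fun i j => A j i)). lra. Qed.

Lemma deg_le i : INR (deg n adj i) <= INR n.
Proof. apply le_INR. unfold deg, nbrs, nodes. rewrite <- (length_seq n 0) at 2. apply filter_length_le. Qed.

Lemma exists_max (f : nat -> R) : forall N, (1 <= N)%nat -> exists u, (u < N)%nat /\ forall l, (l < N)%nat -> f l <= f u.
Proof. induction N; intros H; [lia|]. destruct (Nat.eq_dec N 0) as [->|HN].
  exists 0%nat; split; [lia|]. intros l Hl; assert (l = 0%nat) by lia; subst; lra.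
  destruct (IHN ltac:(lia)) as [u [Hu Hm]].
  destruct (Rle_dec (f N) (f u)).
  - exists u; split; [lia|]. intros l Hl. destruct (Nat.eq_dec l N); [subst; auto|apply Hm; lia].
  - exists N; split; [lia|]. intros l Hl. destruct (Nat.eq_dec l N); [subst; lra|]. specialize (Hm l ltac:(lia)); lra. Qed.

Hypothesis Hc : connected n adj.

Lemma harmonic_const (f : nat -> R) : (1 <= n)%nat ->
  (forall l, (l < n)%nat -> INR (deg n adj l) * f l = sumR (nbrs n adj l) f) ->
  forall l, (l < n)%nat -> f l = f 0%nat.
Proof. intros Hn Hh.
  destruct (exists_max f n Hn) as [u [Hu Hm]].
  assert (Hstep : forall x y, adj x y = true -> f x = f u -> f y = f u).
  { intros x y Hxy Ex. destruct Hg as [_ [_ Hb]]. destruct (Hb _ _ Hxy) as [Hx Hy].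
    apply (sumR_eq_max (nbrs n adj x) f (f u)).
    - intros j Hj. apply in_nbrs in Hj. apply Hm; tauto.
    - rewrite <- Hh by auto. rewrite Ex. unfold deg. auto.
    - apply in_nbrs; auto. }
  assert (Hcl : forall x y, clos_refl_trans nat (edge_rel n adj) x y -> f x = f u -> f y = f u).
  { intros x y Hy. induction Hy; eauto. }
  intros l Hl. rewrite (Hcl u l), (Hcl u 0%nat); auto; apply Hc; auto; lia. Qed.
End G.


Section Dyn.
Variables (n : nat) (adj : nat -> nat -> bool) (a D d rho : R) (r : nat -> R).
Hypotheses (Hn : (2 <= n)%nat) (Hg : simple_graph n adj) (Hc : connected n adj)
  (HD : 0 < D) (Hd0 : 0 < d) (HdD : d < D) (Hrho : 0 < rho).

Notation Q := (Qd a D d).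
Notation x := (bq_x n adj a D d rho r).
Notation al := (bq_alpha n adj a D d rho r).
Notation dg i := (INR (deg n adj i)).
Notation Nb i := (nbrs n adj i).
Notation s := (a + D - d).

Lemma x_S k i : x (S k) i = (rho * dg i * Q (x k i) + rho * sumR (Nb i) (fun j => Q (x k j)) - al k i + r i) / (1 + 2 * rho * dg i).
Proof. unfold bq_x, bq_alpha. simpl. destruct (bq_state n adj a D d rho r k). reflexivity. Qed.

Lemma al_S k i : al (S k) i = al k i + rho * (dg i * Q (x (S k) i) - sumR (Nb i) (fun j => Q (x (S k) j))).
Proof. unfold bq_x, bq_alpha. simpl. destruct (bq_state n adj a D d rho r k). reflexivity. Qed.

Lemma x0 i : x 0 i = 0. Proof. reflexivity. Qed.
Lemma al0 i : al 0 i = 0. Proof. reflexivity. Qed.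

Lemma dg_nonneg i : 0 <= dg i. Proof. apply pos_INR. Qed.

Lemma den_pos i : 0 < 1 + 2 * rho * dg i.
Proof. pose proof (dg_nonneg i). nra. Qed.

Lemma x_S' k i : (1 + 2 * rho * dg i) * x (S k) i = rho * dg i * Q (x k i) + rho * sumR (Nb i) (fun j => Q (x k j)) - al k i + r i.
Proof. rewrite x_S. pose proof (den_pos i). field. lra. Qed.

Lemma Q_two y : Q y = a \/ Q y = a + D.
Proof. unfold Qd. destruct (Rle_dec y (a + D - d)); auto. Qed.
Lemma Q_low y : y <= s -> Q y = a.
Proof. unfold Qd. destruct (Rle_dec y (a + D - d)); auto; lra. Qed.
Lemma Q_high y : s < y -> Q y = a + D.
Proof. unfold Qd. destruct (Rle_dec y (a + D - d)); auto; lra. Qed.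
Lemma Q_low_inv y : Q y = a -> y <= s.
Proof. unfold Qd. destruct (Rle_dec y (a + D - d)); auto; lra. Qed.
Lemma Q_high_inv y : Q y = a + D -> s < y.
Proof. unfold Qd. destruct (Rle_dec y (a + D - d)); auto; lra. Qed.
Lemma Q_rng y : a <= Q y <= a + D.
Proof. destruct (Q_two y) as [E|E]; rewrite E; lra. Qed.

Lemma nb_rng i g : (forall j, a <= g j <= a + D) -> dg i * a <= sumR (Nb i) g <= dg i * (a + D).
Proof. intros H. unfold deg. rewrite <- !sumR_const. split; apply sumR_le; intros; apply H. Qed.

Lemma nbQ_rng i k : dg i * a <= sumR (Nb i) (fun j => Q (x k j)) <= dg i * (a + D).
Proof. apply nb_rng. intros; apply Q_rng. Qed.

Lemma al_int k i : exists z : Z, al k i = rho * D * IZR z.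
Proof. induction k. exists 0%Z; rewrite al0; lra.
  destruct IHk as [z Hz]. rewrite al_S, Hz.
  destruct (sumR_two (Nb i) (fun j => Q (x (S k) j)) a D) as [m Hm]. intros; apply Q_two.
  rewrite Hm. unfold deg. destruct (Q_two (x (S k) i)) as [E|E]; rewrite E.
  - exists (z - m)%Z. rewrite minus_IZR. ring.
  - exists (z + Z.of_nat (length (Nb i)) - m)%Z. rewrite minus_IZR, plus_IZR, <- INR_IZR_INZ. ring. Qed.

Definition Ub i := Rmax 0 (2 * rho * dg i * (a + D) + r i - (1 + 2 * rho * dg i) * s + rho * dg i * D).
Definition Lb i := Rmin 0 (2 * rho * dg i * a + r i - (1 + 2 * rho * dg i) * s - rho * dg i * D).

Lemma al_bounds k i : Lb i <= al k i <= Ub i.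
Proof. unfold Ub, Lb. induction k. rewrite al0. split; [apply Rmin_l|apply Rmax_l].
  pose proof (den_pos i) as Hp. pose proof (dg_nonneg i).
  pose proof (x_S' k i) as Ex. pose proof (Q_rng (x k i)). pose proof (nbQ_rng i k).
  pose proof (nbQ_rng i (S k)). pose proof (Q_rng (x (S k) i)).
  assert (HQ1 : rho * dg i * a <= rho * dg i * Q (x k i) <= rho * dg i * (a + D)).
  { split; apply Rmult_le_compat_l; try lra; apply Rmult_le_pos; lra. }
  assert (HN1 : rho * (dg i * a) <= rho * sumR (Nb i) (fun j => Q (x k j)) <= rho * (dg i * (a + D))).
  { split; apply Rmult_le_compat_l; lra. }
  rewrite al_S. split.
  - destruct (Rlt_dec (al k i) (2 * rho * dg i * a + r i - (1 + 2 * rho * dg i) * s)).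
    + assert (Hx : s < x (S k) i).
      { apply (Rmult_lt_reg_l (1 + 2 * rho * dg i)); auto. rewrite Ex. lra. }
      rewrite (Q_high _ Hx). assert (0 <= rho * (dg i * (a + D) - sumR (Nb i) (fun j => Q (x (S k) j)))) by (apply Rmult_le_pos; lra). lra.
    + pose proof (Rmin_r 0 (2 * rho * dg i * a + r i - (1 + 2 * rho * dg i) * s - rho * dg i * D)).
      assert (- (rho * dg i * D) <= rho * (dg i * Q (x (S k) i) - sumR (Nb i) (fun j => Q (x (S k) j)))).
      { replace (- (rho * dg i * D)) with (rho * (- (dg i * D))) by ring. apply Rmult_le_compat_l; [lra|].
        assert (dg i * a <= dg i * Q (x (S k) i)) by (apply Rmult_le_compat_l; lra). lra. } lra.
  - destruct (Rle_dec (2 * rho * dg i * (a + D) + r i - (1 + 2 * rho * dg i) * s) (al k i)).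
    + assert (Hx : x (S k) i <= s).
      { apply (Rmult_le_reg_l (1 + 2 * rho * dg i)); auto. rewrite Ex. lra. }
      rewrite (Q_low _ Hx). assert (rho * (dg i * a - sumR (Nb i) (fun j => Q (x (S k) j))) <= 0) by (assert (0 <= rho * (sumR (Nb i) (fun j => Q (x (S k) j)) - dg i * a)) by (apply Rmult_le_pos; lra); lra). lra.
    + pose proof (Rmax_r 0 (2 * rho * dg i * (a + D) + r i - (1 + 2 * rho * dg i) * s + rho * dg i * D)).
      assert (rho * (dg i * Q (x (S k) i) - sumR (Nb i) (fun j => Q (x (S k) j))) <= rho * dg i * D).
      { rewrite Rmult_assoc. apply Rmult_le_compat_l; [lra|].
        assert (dg i * Q (x (S k) i) <= dg i * (a + D)) by (apply Rmult_le_compat_l; lra). lra. } lra. Qed.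


Lemma nodes_in l : In l (nodes n) <-> (l < n)%nat.
Proof. unfold nodes. rewrite in_seq. lia. Qed.

Lemma sum_al k : sumR (nodes n) (al k) = 0.
Proof. induction k. unfold sumR. induction (nodes n); simpl; auto. rewrite IHl; unfold bq_alpha; simpl; lra.
  rewrite (sumR_ext_in _ _ (fun i => al k i + rho * (dg i * Q (x (S k) i) - sumR (Nb i) (fun j => Q (x (S k) j)))))
    by (intros; apply al_S).
  rewrite sumR_plus, sumR_scal, sumR_minus, double_count by auto. rewrite IHk. lra. Qed.

Lemma key k : sumR (nodes n) (fun i => (1 + 2 * rho * dg i) * x (S k) i)
  = 2 * rho * sumR (nodes n) (fun i => dg i * Q (x k i)) + sumR (nodes n) r.
Proof.
  rewrite (sumR_ext_in _ _ (fun i => rho * (dg i * Q (x k i)) + rho * sumR (Nb i) (fun j => Q (x k j)) - al k i + r i))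
    by (intros; rewrite x_S'; ring).
  rewrite !sumR_plus, sumR_minus, sumR_plus, !sumR_scal, double_count, sum_al by auto. ring. Qed.

Lemma x_next_eq k k' : (forall l, (l < n)%nat -> Q (x k l) = Q (x k' l) /\ al k l = al k' l) ->
  forall l, (l < n)%nat -> x (S k) l = x (S k') l.
Proof. intros H l Hl. rewrite !x_S. destruct (H l Hl) as [E1 E2]. rewrite E1, E2.
  rewrite (sumR_ext_in (Nb l) (fun j => Q (x k j)) (fun j => Q (x k' j))). auto.
  intros j Hj. apply in_nbrs in Hj. apply H; tauto. Qed.

Lemma propagate i j : (forall l, (l < n)%nat -> Q (x i l) = Q (x j l) /\ al i l = al j l) ->
  forall t l, (l < n)%nat -> Q (x (i + t) l) = Q (x (j + t) l) /\ al (i + t) l = al (j + t) l.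
Proof. intros H t. induction t. rewrite !Nat.add_0_r; auto.
  assert (Hx : forall l, (l < n)%nat -> x (S (i + t)) l = x (S (j + t)) l) by (apply x_next_eq; auto).
  intros l Hl. rewrite !Nat.add_succ_r. split. rewrite Hx; auto.
  rewrite !al_S. rewrite Hx by auto. destruct (IHt l Hl) as [_ E]. rewrite E.
  rewrite (sumR_ext_in (Nb l) (fun j0 => Q (x (S (i + t)) j0)) (fun j0 => Q (x (S (j + t)) j0))). auto.
  intros j0 Hj. apply in_nbrs in Hj. rewrite Hx; tauto. Qed.

Lemma eventually_periodic : exists k0 T, (1 <= k0)%nat /\ (1 <= T)%nat /\ periodic_from n adj a D d rho r k0 T.
Proof.
  set (M := sumR (nodes n) (fun i => Ub i - Lb i)).
  set (N := up (M / (rho * D))).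
  set (Ca := map (fun z => rho * D * IZR z) (Zrange N)).
  set (code := fun k => (map (fun l => Q (x k l)) (nodes n), map (al k) (nodes n))).
  assert (Hin : forall k, In (code k) (list_prod (words [a; a + D] n) (words Ca n))).
  { intros k. apply in_prod; apply in_words; try (rewrite length_map; apply length_seq).
    - intros y Hy. apply in_map_iff in Hy. destruct Hy as [l [<- _]].
      destruct (Q_two (x k l)) as [E|E]; rewrite E; simpl; auto.
    - intros y Hy. apply in_map_iff in Hy. destruct Hy as [l [<- Hl]].
      destruct (al_int k l) as [z Hz]. unfold Ca. rewrite Hz. apply (in_map (fun z => rho * D * IZR z)). apply in_Zrange.
      assert (HM : Rabs (al k l) <= M).
      { pose proof (al_bounds k l). unfold Ub, Lb in *.
        pose proof (Rmax_l 0 (2 * rho * dg l * (a + D) + r l - (1 + 2 * rho * dg l) * s + rho * dg l * D)).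
        pose proof (Rmin_l 0 (2 * rho * dg l * a + r l - (1 + 2 * rho * dg l) * s - rho * dg l * D)).
        apply Rle_trans with (Ub l - Lb l). unfold Ub, Lb. apply Rabs_le; lra.
        unfold M. apply (sumR_nonneg_term (nodes n) (fun i => Ub i - Lb i)); auto.
        intros j _. unfold Ub, Lb.
        pose proof (Rmax_l 0 (2 * rho * dg j * (a + D) + r j - (1 + 2 * rho * dg j) * s + rho * dg j * D)).
        pose proof (Rmin_l 0 (2 * rho * dg j * a + r j - (1 + 2 * rho * dg j) * s - rho * dg j * D)). lra. }
      rewrite Hz in HM. assert (HrD : 0 < rho * D) by nra.
      rewrite Rabs_mult, (Rabs_pos_eq (rho * D)) in HM by lra.
      assert (Rabs (IZR z) <= M / (rho * D)).
      { apply (Rmult_le_reg_l (rho * D)); auto. replace (rho * D * (M / (rho * D))) with M by (field; lra). lra. }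
      destruct (archimed (M / (rho * D))) as [Hup _]. fold N in Hup.
      rewrite Rabs_Zabs in H. assert (IZR (Z.abs z) < IZR N) by lra. apply lt_IZR in H0. lia. }
  destruct (pigeon _ code Hin) as [i [j [Hij Ec]]].
  unfold code in Ec. injection Ec as E1 E2.
  assert (Hst : forall l, (l < n)%nat -> Q (x i l) = Q (x j l) /\ al i l = al j l).
  { intros l Hl. apply nodes_in in Hl. split.
    - exact (ext_in_map E1 l Hl).
    - exact (ext_in_map E2 l Hl). }
  exists (S i), (j - i)%nat. split; [lia|]. split; [lia|].
  intros k l Hk Hl. replace k with (S (i + (k - S i))) by lia.
  replace (S (i + (k - S i)) + (j - i))%nat with (S (j + (k - S i))) by lia.
  symmetry. apply x_next_eq; auto. intros; apply propagate; auto. Qed.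


Lemma al_formula k l : al k l = rho * dg l * Q (x k l) + rho * sumR (Nb l) (fun j => Q (x k j)) + r l
   - (1 + 2 * rho * dg l) * x (S k) l.
Proof. rewrite x_S'. ring. Qed.

Lemma sumQ_const k c l : (forall j, In j (Nb l) -> Q (x k j) = c) -> sumR (Nb l) (fun j => Q (x k j)) = dg l * c.
Proof. intros H. rewrite (sumR_ext_in _ _ (fun _ => c)) by auto. rewrite sumR_const. reflexivity. Qed.

Lemma const_stat k1 c : (forall k l, (k1 <= k)%nat -> (l < n)%nat -> Q (x k l) = c) ->
  forall k l, (k1 < k)%nat -> (l < n)%nat -> x (S k) l = x k l.
Proof. intros H.
  assert (Ha : forall k l, (k1 <= k)%nat -> (l < n)%nat -> al (S k) l = al k l).
  { intros k l Hk Hl. rewrite al_S. rewrite (H (S k) l) by lia.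
    rewrite (sumQ_const (S k) c l). ring. intros j Hj; apply in_nbrs in Hj; apply H; lia || tauto. }
  intros k l Hk Hl. destruct k as [|k]; [lia|].
  assert (Hn1 : forall k', (k1 <= k')%nat -> forall j, In j (Nb l) -> Q (x k' j) = c).
  { intros k' Hk' j Hj; apply in_nbrs in Hj; apply H; lia || tauto. }
  rewrite (x_S (S k) l). rewrite (H (S k) l) by lia. rewrite (sumQ_const (S k) c l) by (apply Hn1; lia).
  rewrite (Ha k l) by lia. rewrite (x_S k l). rewrite (H k l) by lia. rewrite (sumQ_const k c l) by (apply Hn1; lia).
  reflexivity. Qed.

Lemma run_al_high l u : forall j, (forall k, (S u < k <= S u + j)%nat -> s < x k l) ->
  - (rho * dg l * D) <= al (S u + j) l - al u l.
Proof. pose proof (dg_nonneg l).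
  induction j; intros Hr.
  - rewrite Nat.add_0_r, al_S. pose proof (nbQ_rng l (S u)). pose proof (Q_rng (x (S u) l)).
    assert (dg l * a <= dg l * Q (x (S u) l)) by (apply Rmult_le_compat_l; lra).
    replace (- (rho * dg l * D)) with (rho * (dg l * a - dg l * (a + D))) by ring.
    assert (rho * (dg l * a - dg l * (a + D)) <= rho * (dg l * Q (x (S u) l) - sumR (Nb l) (fun j => Q (x (S u) j)))) by (apply Rmult_le_compat_l; lra).
    lra.
  - assert (IH := IHj (fun k Hk => Hr k ltac:(lia))).
    replace (S u + S j)%nat with (S (S u + j)) by lia. rewrite al_S.
    rewrite (Q_high _ (Hr (S (S u + j)) ltac:(lia))).
    pose proof (nbQ_rng l (S (S u + j))).
    assert (0 <= rho * (dg l * (a + D) - sumR (Nb l) (fun j0 => Q (x (S (S u + j)) j0)))) by (apply Rmult_le_pos; lra).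
    lra. Qed.

Lemma run_al_low l u : forall j, (forall k, (S u < k <= S u + j)%nat -> x k l <= s) ->
  al (S u + j) l - al u l <= rho * dg l * D.
Proof. pose proof (dg_nonneg l).
  induction j; intros Hr.
  - rewrite Nat.add_0_r, al_S. pose proof (nbQ_rng l (S u)). pose proof (Q_rng (x (S u) l)).
    assert (dg l * Q (x (S u) l) <= dg l * (a + D)) by (apply Rmult_le_compat_l; lra).
    replace (rho * dg l * D) with (rho * (dg l * (a + D) - dg l * a)) by ring.
    assert (rho * (dg l * Q (x (S u) l) - sumR (Nb l) (fun j => Q (x (S u) j))) <= rho * (dg l * (a + D) - dg l * a)) by (apply Rmult_le_compat_l; lra).
    lra.
  - assert (IH := IHj (fun k Hk => Hr k ltac:(lia))).
    replace (S u + S j)%nat with (S (S u + j)) by lia. rewrite al_S.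
    rewrite (Q_low _ (Hr (S (S u + j)) ltac:(lia))).
    pose proof (nbQ_rng l (S (S u + j))).
    assert (0 <= rho * (sumR (Nb l) (fun j0 => Q (x (S (S u + j)) j0)) - dg l * a)) by (apply Rmult_le_pos; lra).
    lra. Qed.

Lemma bound_high l u t : (S u <= t)%nat -> x (S u) l <= s ->
  (forall k, (S u < k <= t)%nat -> s < x k l) ->
  (1 + 2 * rho * dg l) * (x (S t) l - s) <= 3 * rho * dg l * D.
Proof. intros Ht Hu H. pose proof (dg_nonneg l). pose proof (den_pos l).
  assert (Hal := run_al_high l u (t - S u) ltac:(intros k Hk; apply H; lia)).
  replace (S u + (t - S u))%nat with t in Hal by lia.
  pose proof (x_S' t l) as E1. pose proof (x_S' u l) as E2.
  pose proof (Q_rng (x t l)). pose proof (Q_rng (x u l)). pose proof (nbQ_rng l t). pose proof (nbQ_rng l u).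
  assert (rho * dg l * Q (x t l) - rho * dg l * Q (x u l) <= rho * dg l * D).
  { replace (rho * dg l * Q (x t l) - rho * dg l * Q (x u l)) with (rho * dg l * (Q (x t l) - Q (x u l))) by ring.
    apply Rmult_le_compat_l; [apply Rmult_le_pos|]; lra. }
  assert (rho * sumR (Nb l) (fun j => Q (x t j)) - rho * sumR (Nb l) (fun j => Q (x u j)) <= rho * (dg l * D)).
  { replace (rho * sumR (Nb l) (fun j => Q (x t j)) - rho * sumR (Nb l) (fun j => Q (x u j))) with
      (rho * (sumR (Nb l) (fun j => Q (x t j)) - sumR (Nb l) (fun j => Q (x u j)))) by ring.
    apply Rmult_le_compat_l; lra. }
  assert ((1 + 2 * rho * dg l) * (x (S u) l - s) <= 0).
  { replace 0 with ((1 + 2 * rho * dg l) * 0) by ring. apply Rmult_le_compat_l; lra. }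
  replace ((1 + 2 * rho * dg l) * (x (S t) l - s)) with
    ((1 + 2 * rho * dg l) * x (S t) l - (1 + 2 * rho * dg l) * x (S u) l + (1 + 2 * rho * dg l) * (x (S u) l - s)) by ring.
  rewrite E1, E2. lra. Qed.

Lemma bound_low l u t : (S u <= t)%nat -> s < x (S u) l ->
  (forall k, (S u < k <= t)%nat -> x k l <= s) ->
  - (3 * rho * dg l * D) <= (1 + 2 * rho * dg l) * (x (S t) l - s).
Proof. intros Ht Hu H. pose proof (dg_nonneg l). pose proof (den_pos l).
  assert (Hal := run_al_low l u (t - S u) ltac:(intros k Hk; apply H; lia)).
  replace (S u + (t - S u))%nat with t in Hal by lia.
  pose proof (x_S' t l) as E1. pose proof (x_S' u l) as E2.
  pose proof (Q_rng (x t l)). pose proof (Q_rng (x u l)). pose proof (nbQ_rng l t). pose proof (nbQ_rng l u).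
  assert (- (rho * dg l * D) <= rho * dg l * Q (x t l) - rho * dg l * Q (x u l)).
  { replace (rho * dg l * Q (x t l) - rho * dg l * Q (x u l)) with (rho * dg l * (Q (x t l) - Q (x u l))) by ring.
    replace (- (rho * dg l * D)) with (rho * dg l * (- D)) by ring.
    apply Rmult_le_compat_l; [apply Rmult_le_pos|]; lra. }
  assert (- (rho * (dg l * D)) <= rho * sumR (Nb l) (fun j => Q (x t j)) - rho * sumR (Nb l) (fun j => Q (x u j))).
  { replace (rho * sumR (Nb l) (fun j => Q (x t j)) - rho * sumR (Nb l) (fun j => Q (x u j))) with
      (rho * (sumR (Nb l) (fun j => Q (x t j)) - sumR (Nb l) (fun j => Q (x u j)))) by ring.
    replace (- (rho * (dg l * D))) with (rho * (- (dg l * D))) by ring.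
    apply Rmult_le_compat_l; lra. }
  assert (0 <= (1 + 2 * rho * dg l) * (x (S u) l - s)).
  { apply Rmult_le_pos; lra. }
  replace ((1 + 2 * rho * dg l) * (x (S t) l - s)) with
    ((1 + 2 * rho * dg l) * x (S t) l - (1 + 2 * rho * dg l) * x (S u) l + (1 + 2 * rho * dg l) * (x (S u) l - s)) by ring.
  rewrite E1, E2. lra. Qed.

Lemma last_low l tL : (1 <= tL)%nat -> x tL l <= s -> forall tau, (tL < tau)%nat ->
  exists u, (tL <= S u)%nat /\ (S u < tau)%nat /\ x (S u) l <= s /\ forall k, (S u < k < tau)%nat -> s < x k l.
Proof. intros H1 H2 tau. induction tau; intros Ht; [lia|].
  destruct (Nat.eq_dec tau tL) as [->|Hne].
  - exists (tL - 1)%nat. replace (S (tL - 1)) with tL by lia. repeat split; auto; lia.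
  - destruct (Rle_dec (x tau l) s).
    + exists (tau - 1)%nat. replace (S (tau - 1)) with tau by lia. repeat split; auto; lia.
    + destruct (IHtau ltac:(lia)) as [u [A [B [C E]]]]. exists u. repeat split; auto; try lia.
      intros k Hk. destruct (Nat.eq_dec k tau) as [->|]; [lra|]. apply E; lia. Qed.

Lemma last_high l tH : (1 <= tH)%nat -> s < x tH l -> forall tau, (tH < tau)%nat ->
  exists u, (tH <= S u)%nat /\ (S u < tau)%nat /\ s < x (S u) l /\ forall k, (S u < k < tau)%nat -> x k l <= s.
Proof. intros H1 H2 tau. induction tau; intros Ht; [lia|].
  destruct (Nat.eq_dec tau tH) as [->|Hne].
  - exists (tH - 1)%nat. replace (S (tH - 1)) with tH by lia. repeat split; auto; lia.
  - destruct (Rle_dec (x tau l) s).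
    + destruct (IHtau ltac:(lia)) as [u [A [B [C E]]]]. exists u. repeat split; auto; try lia.
      intros k Hk. destruct (Nat.eq_dec k tau) as [->|]; [lra|]. apply E; lia.
    + exists (tau - 1)%nat. replace (S (tau - 1)) with tau by lia. repeat split; auto; try lia. lra. Qed.

Lemma node_bound l k tL tH : (1 <= tL <= k)%nat -> (1 <= tH <= k)%nat -> x tL l <= s -> s < x tH l ->
  - (3 * rho * dg l * D) <= (1 + 2 * rho * dg l) * (x (S k) l - s) <= 3 * rho * dg l * D.
Proof. intros HL HH E1 E2. split.
  - destruct (last_high l tH ltac:(lia) E2 (S k) ltac:(lia)) as [u [A [B [C E]]]].
    apply (bound_low l u k); auto; try lia. intros; apply E; lia.
  - destruct (last_low l tL ltac:(lia) E1 (S k) ltac:(lia)) as [u [A [B [C E]]]].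
    apply (bound_high l u k); auto; try lia. intros; apply E; lia. Qed.


Lemma sum_shift (g : nat -> R) p : sumR (seq 0 p) (fun m => g (S m)) = sumR (seq 0 p) g + g p - g 0%nat.
Proof.
  assert (A : sumR (seq 0 (S p)) g = g 0%nat + sumR (seq 0 p) (fun m => g (S m))).
  { simpl seq. rewrite sumR_cons. rewrite <- seq_shift, sumR_map. reflexivity. }
  rewrite seq_S, sumR_app in A. simpl in A. lra. Qed.

Lemma telescope (h : nat -> R) k p : h (k + p)%nat - h k = sumR (seq 0 p) (fun m => h (S (k + m)) - h (k + m)%nat).
Proof. induction p. rewrite Nat.add_0_r. simpl. lra.
  rewrite seq_S, sumR_app. simpl. rewrite <- IHp. replace (k + S p)%nat with (S (k + p)) by lia. lra. Qed.

Section Per.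
Variables (k0 p : nat).
Hypotheses (Hk0 : (1 <= k0)%nat) (Hp : (1 <= p)%nat) (Hper : periodic_from n adj a D d rho r k0 p).

Lemma Qper k l : (k0 <= k)%nat -> (l < n)%nat -> Q (x (k + p) l) = Q (x k l).
Proof. intros; rewrite Hper; auto. Qed.

Lemma al_per k l : (k0 <= k)%nat -> (l < n)%nat -> al (k + p) l = al k l.
Proof. intros Hk Hl. rewrite !al_formula. replace (S (k + p)) with (S k + p)%nat by lia.
  rewrite (Hper (S k) l) by lia. rewrite (Qper k l) by auto.
  rewrite (sumR_ext_in (Nb l) (fun j => Q (x (k + p) j)) (fun j => Q (x k j))). reflexivity.
  intros j Hj; apply in_nbrs in Hj; apply Qper; tauto. Qed.

Definition W k l := sumR (seq 0 p) (fun m => Q (x (k + m) l)).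

Lemma W_shift k l : (k0 <= k)%nat -> (l < n)%nat -> W (S k) l = W k l.
Proof. intros Hk Hl. unfold W.
  assert (E : sumR (seq 0 p) (fun m => Q (x (S k + m) l)) =
     sumR (seq 0 p) (fun m => Q (x (k + m) l)) + Q (x (k + p) l) - Q (x (k + 0) l)).
  { rewrite <- (sum_shift (fun m => Q (x (k + m) l)) p). apply sumR_ext_in; intros; rewrite Nat.add_succ_r; reflexivity. }
  rewrite E. rewrite Nat.add_0_r, (Qper k l) by auto. lra. Qed.

Lemma W_const k l : (k0 <= k)%nat -> (l < n)%nat -> W k l = W k0 l.
Proof. intros Hk Hl. replace k with (k0 + (k - k0))%nat by lia. induction (k - k0)%nat.
  rewrite Nat.add_0_r; auto. rewrite Nat.add_succ_r, W_shift by (auto; lia). auto. Qed.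

Lemma W_harm k l : (k0 <= k)%nat -> (l < n)%nat -> dg l * W k l = sumR (Nb l) (W k).
Proof. intros Hk Hl.
  pose proof (telescope (fun t => al t l) k p) as T. simpl in T. rewrite al_per in T by auto.
  rewrite (sumR_ext_in _ _ (fun m => rho * (dg l * Q (x (S (k + m)) l) - sumR (Nb l) (fun j => Q (x (S (k + m)) j)))))
    in T by (intros; rewrite al_S; ring).
  rewrite sumR_scal, sumR_minus, sumR_scal, sumR_exchange in T.
  assert (E1 : sumR (seq 0 p) (fun m => Q (x (S (k + m)) l)) = W k l) by (rewrite <- W_shift by auto; reflexivity).
  assert (E2 : sumR (Nb l) (fun j => sumR (seq 0 p) (fun m => Q (x (S (k + m)) j))) = sumR (Nb l) (W k)).
  { apply sumR_ext_in; intros j Hj. apply in_nbrs in Hj. rewrite <- W_shift by (auto; tauto). reflexivity. }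
  rewrite E1, E2 in T.
  assert (rho * (dg l * W k l - sumR (Nb l) (W k)) = 0) by lra.
  apply Rmult_integral in H. destruct H; lra. Qed.

Lemma W_cons k l : (k0 <= k)%nat -> (l < n)%nat -> W k l = W k 0%nat.
Proof. intros Hk Hl. apply (harmonic_const n adj Hg Hc (W k)); auto; try lia.
  intros; apply W_harm; auto. Qed.

Lemma const_per1 c : (forall k l, (k0 <= k)%nat -> (l < n)%nat -> Q (x k l) = c) ->
  periodic_from n adj a D d rho r k0 1.
Proof. intros H. pose proof (const_stat k0 c H) as Hs.
  assert (Hall : forall t l, (S k0 <= t)%nat -> (l < n)%nat -> x t l = x (S k0) l).
  { intros t l Ht Hl. replace t with (S k0 + (t - S k0))%nat by lia. induction (t - S k0)%nat.
    rewrite Nat.add_0_r; auto. rewrite Nat.add_succ_r, Hs by (auto; lia). auto. }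
  intros k l Hk Hl. rewrite Nat.add_1_r. destruct (Nat.eq_dec k k0) as [->|].
  - rewrite <- (Hper k0 l) by (auto; lia). symmetry. apply Hall; auto; lia.
  - apply Hs; auto; lia. Qed.

End Per.


Lemma n_pos : 0 < INR n.
Proof. apply lt_0_INR; lia. Qed.

Lemma len_nodes : INR (length (nodes n)) = INR n.
Proof. unfold nodes; rewrite length_seq; auto. Qed.

Lemma Dt_bounds : 0 <= sumR (nodes n) (fun i => dg i) <= INR n * INR n.
Proof. split.
  - rewrite <- (Rmult_0_r (INR (length (nodes n)))), <- sumR_const. apply sumR_le; intros; apply dg_nonneg.
  - rewrite <- len_nodes at 1. rewrite <- sumR_const. apply sumR_le; intros; apply deg_le. Qed.

Lemma sum_dg_c c : sumR (nodes n) (fun i => dg i * c) = c * sumR (nodes n) (fun i => dg i).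
Proof. rewrite <- sumR_scal. apply sumR_ext_in; intros; ring. Qed.

Lemma sum_affine c1 c2 : sumR (nodes n) (fun i => c1 + c2 * dg i) = INR n * c1 + c2 * sumR (nodes n) (fun i => dg i).
Proof. rewrite sumR_plus, sumR_const, sumR_scal, len_nodes. ring. Qed.

Lemma rbar_eq : INR n * rbar n r = sumR (nodes n) r.
Proof. unfold rbar. pose proof n_pos. field. lra. Qed.

Lemma cycle_bound k : (forall l, (l < n)%nat -> exists tL tH, (1 <= tL <= k)%nat /\ (1 <= tH <= k)%nat /\
     x tL l <= s /\ s < x tH l) -> Rabs (rbar n r - s) < 6 * rho * INR n * D.
Proof. intros H.
  set (Dt := sumR (nodes n) (fun i => dg i)).
  pose proof (key k) as HK. pose proof Dt_bounds as HDt. fold Dt in HDt.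
  pose proof n_pos as Hn0. pose proof rbar_eq as Hr.
  assert (Hup : sumR (nodes n) (fun i => (1 + 2 * rho * dg i) * x (S k) i) <= INR n * s + (2 * rho * s + 3 * rho * D) * Dt).
  { rewrite <- sum_affine. apply sumR_le. intros i Hi. apply nodes_in in Hi.
    destruct (H i Hi) as [tL [tH [A [B [C E]]]]]. destruct (node_bound i k tL tH A B C E). lra. }
  assert (Hlo : INR n * s + (2 * rho * s - 3 * rho * D) * Dt <= sumR (nodes n) (fun i => (1 + 2 * rho * dg i) * x (S k) i)).
  { rewrite <- sum_affine. apply sumR_le. intros i Hi. apply nodes_in in Hi.
    destruct (H i Hi) as [tL [tH [A [B [C E]]]]]. destruct (node_bound i k tL tH A B C E). lra. }
  assert (HQ : a * Dt <= sumR (nodes n) (fun i => dg i * Q (x k i)) <= (a + D) * Dt).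
  { unfold Dt. rewrite <- !sum_dg_c. split; apply sumR_le; intros; apply Rmult_le_compat_l; try apply dg_nonneg; apply Q_rng. }
  assert (HQ2 : rho * a * Dt <= rho * sumR (nodes n) (fun i => dg i * Q (x k i)) <= rho * (a + D) * Dt).
  { rewrite !Rmult_assoc. split; apply Rmult_le_compat_l; lra. }
  assert (H1 : 0 <= rho * d * Dt) by (apply Rmult_le_pos; [apply Rmult_le_pos|]; lra).
  assert (H2 : rho * d * Dt <= rho * D * Dt) by (apply Rmult_le_compat_r; [lra|]; apply Rmult_le_compat_l; lra).
  assert (H3 : rho * D * Dt <= rho * D * (INR n * INR n)) by (apply Rmult_le_compat_l; [apply Rmult_le_pos|]; lra).
  assert (H4 : 0 < rho * D * (INR n * INR n)) by (apply Rmult_lt_0_compat; [apply Rmult_lt_0_compat|apply Rmult_lt_0_compat]; lra).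
  assert (Hb : - (5 * rho * D * (INR n * INR n)) <= INR n * (rbar n r - s) <= 5 * rho * D * (INR n * INR n)).
  { replace (INR n * (rbar n r - s)) with (INR n * rbar n r - INR n * s) by ring. rewrite Hr. lra. }
  apply Rabs_def1.
  - apply (Rmult_lt_reg_l (INR n)); auto. replace (INR n * (6 * rho * INR n * D)) with (6 * (rho * D * (INR n * INR n))) by ring. lra.
  - apply (Rmult_lt_reg_l (INR n)); auto. replace (INR n * - (6 * rho * INR n * D)) with (- (6 * (rho * D * (INR n * INR n)))) by ring. lra. Qed.

Lemma conv_case k0 : (1 <= k0)%nat -> periodic_from n adj a D d rho r k0 1 -> converges_alt n adj a D d rho r k0.
Proof. intros Hk0 Hper.
  assert (Hc1 : forall k l, (k0 <= k)%nat -> (l < n)%nat -> Q (x k l) = Q (x k0 l)).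
  { intros k l Hk Hl. replace k with (k0 + (k - k0))%nat by lia. induction (k - k0)%nat.
    rewrite Nat.add_0_r; auto. rewrite Nat.add_succ_r, <- Nat.add_1_r, Hper by (auto; lia). auto. }
  assert (Hc2 : forall l, (l < n)%nat -> Q (x k0 l) = Q (x k0 0%nat)).
  { intros l Hl. pose proof (W_cons k0 1 Hk0 (le_n 1) Hper k0 l (le_n k0) Hl) as E.
    unfold W in E. simpl in E. rewrite !Nat.add_0_r in E. lra. }
  set (xQ := Q (x k0 0%nat)).
  assert (Hq : forall k l, (k0 <= k)%nat -> (l < n)%nat -> Q (x k l) = xQ).
  { intros. rewrite Hc1, Hc2; auto. }
  exists xQ. split; [apply Q_two|]. split; auto.
  set (Dt := sumR (nodes n) (fun i => dg i)).
  pose proof (key k0) as HK. pose proof Dt_bounds as HDt. fold Dt in HDt.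
  pose proof n_pos as Hn0. pose proof rbar_eq as Hr.
  assert (HDm : Dt = 2 * INR (num_edges n adj)) by (apply deg_total_edges; auto).
  assert (Hm0 : 0 <= INR (num_edges n adj)) by apply pos_INR.
  rewrite (sumR_ext_in _ (fun i => dg i * Q (x k0 i)) (fun i => dg i * xQ)) in HK.
  2:{ intros i Hi; apply nodes_in in Hi; rewrite Hq; auto. }
  rewrite sum_dg_c in HK. fold Dt in HK.
  rewrite (sumR_ext_in _ (fun i => (1 + 2 * rho * dg i) * x (S k0) i) (fun i => (1 + 2 * rho * dg i) * x k0 i)) in HK.
  2:{ intros i Hi; apply nodes_in in Hi. rewrite <- Nat.add_1_r, Hper; auto. }
  assert (HK4 : 0 <= 4 * rho * INR (num_edges n adj) / INR n).
  { unfold Rdiv. apply Rmult_le_pos; [|left; apply Rinv_0_lt_compat; auto]. apply Rmult_le_pos; lra. }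
  split.
  - intros E. rewrite E in Hq, HK.
    assert (Hs : sumR (nodes n) (fun i => (1 + 2 * rho * dg i) * x k0 i) <= INR n * s + 2 * rho * s * Dt).
    { rewrite <- sum_affine. apply sumR_le. intros i Hi. apply nodes_in in Hi.
      pose proof (Q_low_inv _ (Hq k0 i (le_n k0) Hi)). pose proof (den_pos i).
      assert ((1 + 2 * rho * dg i) * x k0 i <= (1 + 2 * rho * dg i) * s) by (apply Rmult_le_compat_l; lra). lra. }
    assert (HB : INR n * (rbar n r - a) <= INR n * ((1 + 4 * rho * INR (num_edges n adj) / INR n) * (D - d))).
    { replace (INR n * ((1 + 4 * rho * INR (num_edges n adj) / INR n) * (D - d))) with
        (INR n * (D - d) + 2 * rho * (D - d) * (2 * INR (num_edges n adj))) by (field; lra).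
      rewrite <- HDm. replace (INR n * (rbar n r - a)) with (INR n * rbar n r - INR n * a) by ring. rewrite Hr.
      assert (rho * s * Dt - rho * a * Dt = rho * (D - d) * Dt) by ring. lra. }
    apply Rmult_le_reg_l in HB; auto.
    assert (0 <= (1 + 4 * rho * INR (num_edges n adj) / INR n) * (D - d)) by (apply Rmult_le_pos; lra).
    unfold projX, Rmax, Rmin. repeat destruct Rle_dec; apply Rabs_le; lra.
  - intros E. rewrite E in Hq, HK.
    assert (Hs : INR n * s + 2 * rho * s * Dt < sumR (nodes n) (fun i => (1 + 2 * rho * dg i) * x k0 i)).
    { rewrite <- sum_affine. apply sumR_lt. unfold nodes; destruct n; [lia|discriminate].
      intros i Hi. apply nodes_in in Hi.
      pose proof (Q_high_inv _ (Hq k0 i (le_n k0) Hi)). pose proof (den_pos i).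
      assert ((1 + 2 * rho * dg i) * s < (1 + 2 * rho * dg i) * x k0 i) by (apply Rmult_lt_compat_l; lra). lra. }
    assert (HB : INR n * (a + D - rbar n r) < INR n * ((1 + 4 * rho * INR (num_edges n adj) / INR n) * d)).
    { replace (INR n * ((1 + 4 * rho * INR (num_edges n adj) / INR n) * d)) with
        (INR n * d + 2 * rho * d * (2 * INR (num_edges n adj))) by (field; lra).
      rewrite <- HDm. replace (INR n * (a + D - rbar n r)) with (INR n * (a + D) - INR n * rbar n r) by ring. rewrite Hr.
      assert (rho * s * Dt - rho * (a + D) * Dt = - (rho * d * Dt)) by ring. lra. }
    apply Rmult_lt_reg_l in HB; auto.
    assert (0 < (1 + 4 * rho * INR (num_edges n adj) / INR n) * d) by (apply Rmult_lt_0_compat; lra).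
    unfold projX, Rmax, Rmin. repeat destruct Rle_dec; apply Rabs_def1; lra. Qed.

Lemma main : exists k0 : nat,
    (converges_alt n adj a D d rho r k0 /\ ~ cycles_alt n adj a D d rho r k0) \/
    (~ converges_alt n adj a D d rho r k0 /\ cycles_alt n adj a D d rho r k0).
Proof.
  destruct eventually_periodic as [k0 [T0 [Hk0 [HT0 Hper0]]]].
  destruct (min_exists (fun T => (1 <= T)%nat /\ periodic_from n adj a D d rho r k0 T) T0 (conj HT0 Hper0))
    as [p [[Hp Hper] Hmin]].
  exists k0.
  destruct (Nat.eq_dec p 1) as [->|Hp2].
  - left. split. apply conv_case; auto.
    intros [T [HT [_ [HminT _]]]]. apply (HminT 1%nat); auto; lia.
  - assert (Hallc : forall c, (forall k l, (k0 <= k)%nat -> (l < n)%nat -> Q (x k l) = c) -> False).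
    { intros c Hq. apply (Hmin 1%nat); [lia|]. split; auto. exact (const_per1 k0 p Hk0 Hp Hper c Hq). }
    right. split.
    + intros [xQ [_ [Hq _]]]. exact (Hallc xQ Hq).
    + exists p. split; [lia|]. split; auto. split.
      { intros T' H1 H2 HP; apply (Hmin T' H2); auto. }
      split.
      { intros k i j Hk Hi Hj. change (W p k i = W p k j).
        rewrite (W_cons k0 p Hk0 Hp Hper k i), (W_cons k0 p Hk0 Hp Hper k j); auto. }
      apply (cycle_bound (k0 + p)). intros l Hl.
      assert (HWl : forall j k, (j < n)%nat -> (k0 <= k)%nat -> W p k j = W p k0 l).
      { intros j k Hj Hk. rewrite (W_const k0 p Hk0 Hp Hper k j), (W_cons k0 p Hk0 Hp Hper k0 j), (W_cons k0 p Hk0 Hp Hper k0 l); auto. }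
      assert (Hin0 : In 0%nat (seq 0 p)) by (apply in_seq; lia).
      destruct (classic (exists m, (m < p)%nat /\ x (k0 + m) l <= s)) as [[mL [HmL EL]]|HnoL].
      2:{ exfalso. apply (Hallc (a + D)). intros k j Hk Hj.
          assert (Ew : W p k0 l = INR p * (a + D)).
          { unfold W. rewrite (sumR_ext_in _ _ (fun _ => a + D)). rewrite sumR_const, length_seq; auto.
            intros m Hm. apply in_seq in Hm. apply Q_high. destruct (Rle_dec (x (k0 + m) l) s); [|lra].
            exfalso; apply HnoL; exists m; split; [lia|auto]. }
          pose proof (HWl j k Hj Hk) as E. rewrite Ew in E. unfold W in E.
          pose proof (sumR_eq_max (seq 0 p) (fun m => Q (x (k + m) j)) (a + D)) as T.
          rewrite length_seq in T. specialize (T (fun m _ => proj2 (Q_rng _)) E 0%nat Hin0).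
          rewrite Nat.add_0_r in T. exact T. }
      destruct (classic (exists m, (m < p)%nat /\ s < x (k0 + m) l)) as [[mH [HmH EH]]|HnoH].
      2:{ exfalso. apply (Hallc a). intros k j Hk Hj.
          assert (Ew : W p k0 l = INR p * a).
          { unfold W. rewrite (sumR_ext_in _ _ (fun _ => a)). rewrite sumR_const, length_seq; auto.
            intros m Hm. apply in_seq in Hm. apply Q_low. destruct (Rle_dec (x (k0 + m) l) s); [auto|].
            exfalso; apply HnoH; exists m; split; [lia|lra]. }
          pose proof (HWl j k Hj Hk) as E. rewrite Ew in E. unfold W in E.
          pose proof (sumR_eq_min (seq 0 p) (fun m => Q (x (k + m) j)) a) as T.
          rewrite length_seq in T. specialize (T (fun m _ => proj1 (Q_rng _)) E 0%nat Hin0).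
          rewrite Nat.add_0_r in T. exact T. }
      exists (k0 + mL)%nat, (k0 + mH)%nat. repeat split; auto; lia. Qed.

End Dyn.


Theorem theorem2 (n : nat) (adj : nat -> nat -> bool)
  (a Delta delta rho : R) (r : nat -> R) :
  (2 <= n)%nat ->
  simple_graph n adj ->
  connected n adj ->
  0 < Delta ->
  0 < delta -> delta < Delta ->
  0 < rho ->
  exists k0 : nat,
    (converges_alt n adj a Delta delta rho r k0 /\ ~ cycles_alt n adj a Delta delta rho r k0) \/
    (~ converges_alt n adj a Delta delta rho r k0 /\ cycles_alt n adj a Delta delta rho r k0).
Proof.
  intros. eapply main; eauto.
Qed.
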